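(* Let $G$ be a graph of order $n \ge 3$. Suppose that for every vertex $v \in V(G)$ and for all $u,w \in N(v)$ we have $\deg_{\langle N(v)\rangle}(u) + \deg_{\langle N(v)\rangle}(w) \ge \deg_G(v)$. Then $G$ is hamiltonian and $\{1,2\}$-extendable.
   Context: $N(v)$ denotes the open neighbourhood of $v$ and $\langle X\rangle$ the subgraph of $G$ induced by $X \subseteq V(G)$. A graph $G$ is $\{1,2\}$-extendable if for every non-hamiltonian cycle $C$ of $G$ there exists a cycle $C'$ of length $|C|+1$ or $|C|+2$ whose vertex set contains all vertices of $C$. *)

(* Defs.v *)
From mathcomp Require Import all_boot all_order.
Set Implicit Arguments. Unset Strict Implicit. Unset Printing Implicit Defensive.

Section Graphs.
Variable T : finType.
Variable e : rel T.

Definition simple_graph : Prop := symmetric e /\ irreflexive e.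

Definition nbhd (v : T) : {set T} := [set u | e v u].

Definition deg (v : T) : nat := #|nbhd v|.

Definition deg_in (X : {set T}) (u : T) : nat := #|[set x in X | e u x]|.

Definition connected_graph : Prop := forall x y : T, connect e x y.

Definition is_cycle (c : seq T) : Prop := [/\ 3 <= size c, uniq c & cycle e c].

Definition hamiltonian_cycle (c : seq T) : Prop := is_cycle c /\ size c = #|T|.

Definition hamiltonian : Prop := exists c, hamiltonian_cycle c.

Definition extendable12 : Prop :=
  forall c : seq T, is_cycle c -> size c < #|T| ->
    exists c2 : seq T, [/\ is_cycle c2, (size c2 == (size c).+1) || (size c2 == (size c).+2) & {subset c <= c2}].
End Graphs.

(* Main.v *)
Require Import Defs.
From mathcomp Require Import all_boot all_order zify.
From Stdlib Require Import Classical.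
Set Implicit Arguments. Unset Strict Implicit. Unset Printing Implicit Defensive.
Section Surg.
Variable T : finType.
Variable e : rel T.
Hypothesis esym : symmetric e.
Hypothesis eirr : irreflexive e.

Lemma next_head (s : T) p : next (s :: p) s = head s p.
Proof. by case: p => [|a p] /=; rewrite eqxx. Qed.

Lemma next_mid (s y : T) A B : uniq (s :: A ++ y :: B) ->
  next (s :: A ++ y :: B) y = head s B.
Proof.
move=> U; rewrite next_nth.
have yin : y \in s :: A ++ y :: B by rewrite inE mem_cat inE eqxx !orbT.
rewrite yin /=.
move: U => /= /andP [sn U].
have ys : (s == y) = false.
  by apply/negbTE; apply: contraNneq sn => ->; rewrite mem_cat inE eqxx orbT.
have yA : (y \in A) = false.
  by apply/negbTE; move: U; rewrite cat_uniq => /and3P [_ /hasPn H _];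
     apply: contraL (H y (mem_head _ _)) => ->.
rewrite ys index_cat yA /= eqxx addn0 nth_cat ltnNge leqnSn /= subSn // subnn /=.
by case: B {yin sn U}.
Qed.

Definition ext1 (c c2 : seq T) :=
  [/\ is_cycle e c2, size c2 = (size c).+1 & {subset c <= c2}].
Definition ext2 (c c2 : seq T) :=
  [/\ is_cycle e c2, size c2 = (size c).+2 & {subset c <= c2}].

Lemma rot_cyc (c : seq T) s : is_cycle e c -> s \in c ->
  exists2 p, is_cycle e (s :: p) & [/\ size (s :: p) = size c, c =i s :: p &
     next c =1 next (s :: p)].
Proof.
move=> [H3 U C] /rot_to [i p Hr]; exists p.
  by split; rewrite -Hr ?size_rot ?rot_uniq ?rot_cycle.
split; first by rewrite -Hr size_rot.
  by move=> z; rewrite -Hr mem_rot.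
by move=> z; rewrite -Hr next_rot.
Qed.

Lemma insert1 c s z : is_cycle e c -> s \in c -> z \notin c -> e s z ->
  e z (next c s) -> exists c2, ext1 c c2.
Proof.
move=> Hc sc zc esz ezn.
have [p [H3 U C] [Hs Hm Hn]] := rot_cyc Hc sc.
rewrite Hn next_head in ezn.
exists [:: s, z & p]; split.
- split => //; first by apply: leq_trans H3 _.
  + move: U => /= /andP [sp ->].
    move: zc; rewrite Hm inE negb_or => /andP [zs ->].
    by rewrite inE negb_or eq_sym zs sp.
  + case: p H3 U C ezn {Hs Hm Hn} => [//|a p] _ _ /= /andP [_ ->] ->.
    by rewrite esz.
- by rewrite -Hs.
- by move=> w; rewrite Hm !inE => /orP [->|->]; rewrite ?orbT.
Qed.

Lemma insert2 c s z1 z2 : is_cycle e c -> s \in c -> z1 \notin c -> z2 \notin c ->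
  z1 != z2 -> e s z1 -> e z1 z2 -> e z2 (next c s) -> exists c2, ext2 c c2.
Proof.
move=> Hc sc z1c z2c z12 esz ez12 ezn.
have [p [H3 U C] [Hs Hm Hn]] := rot_cyc Hc sc.
rewrite Hn next_head in ezn.
exists [:: s, z1, z2 & p]; split.
- split => //.
  + move: U => /= /andP [sp ->].
    move: z1c z2c; rewrite !Hm !inE !negb_or => /andP [z1s ->] /andP [z2s ->].
    by rewrite z12 eq_sym z1s eq_sym z2s sp.
  + case: p H3 U C ezn {Hs Hm Hn} => [//|a p] _ _ /= /andP [_ ->] ->.
    by rewrite esz ez12.
- by rewrite -Hs.
- by move=> w; rewrite Hm !inE => /orP [->|->]; rewrite ?orbT.
Qed.

Lemma last_rev (s : T) B : last s (rev B) = head s B.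
Proof. by case: B => //= b B; rewrite rev_cons last_rcons. Qed.

Lemma path_rev_rcons (y s : T) B : path e y (rcons B s) -> path e s (rev B).
Proof.
move=> H.
have := rev_path e y (rcons B s).
rewrite last_rcons belast_rcons rev_cons (eq_path (e' := e)); last first.
  by move=> a b /=; rewrite esym.
by rewrite H rcons_path => /andP [].
Qed.

Lemma path_tail z (s y x : T) A : path e s A -> e (last s A) y -> e y x ->
  e z (head y A) -> path e z (A ++ [:: y; x]).
Proof.
case: A => [|a A] /=; first by move=> _ _ yx zy; rewrite yx zy.
move=> /andP [_ pA] ly yx ->; rewrite cat_path pA /=.
by rewrite ly yx.
Qed.

Lemma cross c s y x : is_cycle e c -> s \in c -> y \in c -> s != y ->
  x \notin c -> e x s -> e x y -> e (next c s) (next c y) ->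
  exists c2, ext1 c c2.
Proof.
move=> Hc sc yc sy xc exs exy enn.
have [p [H3 U C] [Hs Hm Hn]] := rot_cyc Hc sc.
have yp : y \in p by move: yc; rewrite Hm inE eq_sym (negbTE sy).
case/splitPr: yp => A B in H3 U C Hs Hm Hn.
rewrite !Hn next_head next_mid // in enn.
have hA : head s (A ++ y :: B) = head y A by case: A {H3 U C Hs Hm Hn enn}.
rewrite hA in enn.
set c2 := [:: x, s & rev B ++ A ++ [:: y]].
have Hperm : perm_eq (s :: rev B ++ A ++ [:: y]) (s :: A ++ y :: B).
  rewrite perm_cons.
  have -> : A ++ y :: B = (A ++ [:: y]) ++ B by rewrite -catA.
  rewrite perm_catC.
  by rewrite perm_cat2l perm_rev.
have xn : x \notin s :: rev B ++ A ++ [:: y].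
  by rewrite (perm_mem Hperm) -Hm.
have Hsz : size c2 = (size (s :: A ++ y :: B)).+1.
  by rewrite -(perm_size Hperm).
exists c2; split.
- split.
  + by rewrite Hsz ltnW.
  + rewrite /c2 [uniq _]/= xn /=.
    by have := perm_uniq Hperm; rewrite [uniq (s :: _)]/= => ->.
  + rewrite /c2 /= exs /=.
    have -> : rcons (rev B ++ A ++ [:: y]) x = rev B ++ (A ++ [:: y; x]).
      by rewrite -cats1 -!catA.
    move: C; rewrite /= rcons_cat cat_path => /andP [pA].
    rewrite /= => /andP [ly pyB].
    rewrite cat_path (path_rev_rcons pyB) /= last_rev.
    apply: (path_tail pA ly); first by rewrite esym.
    case: B {H3 U Hs Hm Hn pyB Hperm xn Hsz c2 hA} enn => [|b B] /= enn.
      by case: A pA ly {enn} => [|a A] /=; [move=> _ -> | move=> /andP [->]].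
    by rewrite esym.
- by rewrite Hsz Hs.
- move=> w; rewrite Hm -(perm_mem Hperm) => wi.
  by rewrite /c2 inE wi orbT.
Qed.

End Surg.

Section Main.
Variable T : finType.
Variable e : rel T.
Hypothesis esym : symmetric e.
Hypothesis eirr : irreflexive e.
Hypothesis conn : connected_graph e.
Hypothesis hyp : forall v u w : T, u \in nbhd e v -> w \in nbhd e v -> u != w ->
     deg e v <= deg_in e (nbhd e v) u + deg_in e (nbhd e v) w.

Lemma exists_out (c : seq T) : size c < #|T| -> exists w, w \notin c.
Proof.
move=> H; case: (pickP (fun w => w \notin c)) => [w Hw|H0]; first by exists w.
exfalso; have : #|T| <= #|c|.
  apply: subset_leq_card; apply/subsetP => w _.
  by have := H0 w => /= /negbFE.
by move=> H1; have := leq_trans H1 (card_size c); rewrite leqNgt H.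
Qed.

Lemma cross_edge (c : seq T) a w : a \in c -> w \notin c ->
  exists u x, [/\ u \in c, x \notin c & e u x].
Proof.
move=> ac wc; have /connectP [p pp wl] := conn a w.
elim: p a ac pp wl => [|b p IH] a ac /=; first by move=> _ wa; rewrite wa ac in wc.
move=> /andP [eab pb] wl; case bc: (b \in c); first exact: IH bc pb wl.
by exists a, b; rewrite bc.
Qed.

Lemma sum_card (P : {set T}) (Q : pred T) :
  \sum_(y in P) (Q y : nat) = #|[set y in P | Q y]|.
Proof.
rewrite -sum1_card big_mkcond /= [RHS]big_mkcond /=.
by apply: eq_bigr => y _; rewrite inE; case: (y \in P); case: (Q y).
Qed.

Definition isext (c c2 : seq T) :=
  [/\ is_cycle e c2, (size c2 == (size c).+1) || (size c2 == (size c).+2)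
    & {subset c <= c2}].

Lemma extend c : is_cycle e c -> size c < #|T| -> exists c2, isext c c2.
Proof.
move=> Hc Hsz; case: (classic (exists c2, isext c c2)) => // NE; exfalso.
have [c0 c0c] : exists c0, c0 \in c.
  by case: (c) Hc => [[]//|a c' _]; exists a; rewrite mem_head.
have [w wc] := exists_out Hsz.
have [u [x [uc xc eux]]] := cross_edge c0c wc.
have E1 : forall c2, ~ ext1 e c c2.
  by move=> c2 [h1 h2 h3]; apply: NE; exists c2; split; rewrite ?h2 ?eqxx.
have E2 : forall c2, ~ ext2 e c c2.
  by move=> c2 [h1 h2 h3]; apply: NE; exists c2; split; rewrite ?h2 ?eqxx ?orbT.
move: (Hc) => [H3 U C].
set nx := next c.
have nxc : forall s, nx s \in c = (s \in c) by move=> s; rewrite mem_next.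
have F1 : forall s, s \in c -> e x s -> ~~ e x (nx s).
  move=> s sc exs; apply/negP => h.
  have esx : e s x by rewrite esym.
  have [c2] := insert1 Hc sc xc esx h; exact: E1.
have F2 : forall s y, s \in c -> e x s -> y \notin c -> e x y -> ~~ e y (nx s).
  move=> s y sc exs yc exy; apply/negP => h.
  have xy : x != y by apply: contraTneq exy => ->; rewrite eirr.
  have esx : e s x by rewrite esym.
  have [c2] := insert2 Hc sc xc yc xy esx exy h; exact: E2.
have F4 : forall s y, s \in c -> y \in c -> s != y -> e x s -> e x y ->
    ~~ e (nx s) (nx y).
  move=> s y sc yc sy exs exy; apply/negP => h.
  have [c2] := cross esym Hc sc yc sy xc exs exy h; exact: E1.
set S := [set s | (s \in c) && e x s].
pose A s := [set y | [&& e s y, e x y & e (nx s) y]].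
pose R s := [set y | [&& e s y, ~~ e x y & ~~ e (nx s) y]].
have HRA : forall s, s \in S -> #|R s| <= #|A s|.
  move=> s; rewrite inE => /andP [sc exs].
  have xN : x \in nbhd e s by rewrite inE esym.
  have nN : nx s \in nbhd e s by rewrite inE next_cycle.
  have xn : x != nx s by apply: contraNneq xc => ->; rewrite nxc.
  have := hyp xN nN xn; rewrite /deg /deg_in.
  set N := nbhd e s; set X := [set y in N | e x y]; set Y := [set y in N | e (nx s) y].
  have AXY : A s = X :&: Y by apply/setP => y; rewrite !inE; case: (e s y).
  have RXY : R s = N :\: (X :|: Y).
    by apply/setP => y; rewrite /X /Y /N /nbhd !inE; case: (e s y); rewrite ?andbT ?andbF /= ?negb_or.
  have sub : X :|: Y \subset N.
    by apply/subsetP => y; rewrite !inE => /orP [] /andP [].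
  rewrite AXY RXY; have e1 := cardsID (X :|: Y) N.
  rewrite (setIidPr sub) in e1; have e2 := cardsUI X Y.
  move=> h; lia.
have HAS : forall s y, s \in S -> y \in A s -> y \in S.
  move=> s y; rewrite !inE => /andP [sc exs] /and3P [esy exy eny].
  rewrite exy andbT; apply/negPn/negP => yc.
  by have := F2 s y sc exs yc exy; rewrite esym eny.
pose Pre y := [set s in S | y \in A s].
have inj : injective nx := can_inj (prev_next U).
have HPre : forall y, y \in S -> #|Pre y| + 2 <= #|R y|.
  move=> y; rewrite inE => /andP [yc exy].
  have sub1 : nx @: Pre y \subset R y :\: [set x; nx y].
    apply/subsetP => z /imsetP [s]; rewrite !inE => /andP [/andP [sc exs]].
    move=> /and3P [esy _ eny] ->.
    have sy : s != y by apply: contraTneq esy => ->; rewrite eirr.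
    rewrite negb_or (inj_eq inj) sy esym eny F1 //= andbT.
    have -> : nx s != x by apply: contraNneq xc => <-; rewrite nxc.
    by rewrite esym F4 // eq_sym.
  have sub2 : [set x; nx y] \subset R y.
    apply/subsetP => z; rewrite !inE => /orP [] /eqP ->.
      by rewrite esym exy eirr /= esym F1.
    by rewrite next_cycle // F1 // eirr.
  have c2 : #|[set x; nx y]| = 2.
    by rewrite cards2; case: eqP => // h; move: xc; rewrite h nxc yc.
  rewrite -(card_imset _ inj) -(cardsID [set x; nx y] (R y)) (setIidPr sub2) c2.
  by rewrite addnC leq_add2l subset_leq_card.
have uS : u \in S by rewrite inE uc esym.
have L1 : \sum_(s in S) #|R s| <= \sum_(s in S) #|A s| by apply: leq_sum.
have L2 : \sum_(s in S) #|A s| = \sum_(y in S) #|Pre y|.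
  have -> : \sum_(s in S) #|A s| = \sum_(s in S) \sum_(y in S) (y \in A s : nat).
    apply: eq_bigr => s sS; rewrite sum_card; apply: eq_card => y.
    rewrite [in RHS]inE; case yA: (y \in A s); rewrite ?andbF ?andbT //.
    by rewrite (HAS s y sS yA).
  by rewrite exchange_big /=; apply: eq_bigr => y _; rewrite sum_card.
have L3 : \sum_(y in S) (#|Pre y| + 2) <= \sum_(y in S) #|R y| by apply: leq_sum.
rewrite big_split /= sum_nat_const in L3.
have : 0 < #|S| by apply/card_gt0P; exists u.
lia.
Qed.

Lemma two_nbrs : 2 < #|T| -> exists v a b, [/\ e v a, e v b & a != b].
Proof.
move=> n3.
have [a0 _] : exists a0 : T, true.
  by case: (pickP (fun _ : T => true)) => [a _|H]; [exists a | rewrite eq_card0 in n3].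
have [w1 w1c] := exists_out (c := [:: a0]) (ltnW n3).
have [u [x1 [uc x1c eux1]]] := cross_edge (mem_head a0 [::]) w1c.
move: uc; rewrite inE => /eqP ?; subst u.
have [w2 w2c] := exists_out (c := [:: a0; x1]) n3.
have [u [x2 [uc x2c eux2]]] := cross_edge (mem_head a0 [:: x1]) w2c.
move: x1c x2c uc; rewrite !inE !negb_or => x1a /andP [x2a x2x] /orP [] /eqP ?; subst u.
  by exists a0, x1, x2; rewrite eux1 eux2 eq_sym x2x.
by exists x1, a0, x2; rewrite esym eux1 eux2 eq_sym x2a.
Qed.

Lemma triangle : 2 < #|T| -> exists c, is_cycle e c.
Proof.
move=> n3; have [v [a [b [eva evb ab]]]] := two_nbrs n3.
have aN : a \in nbhd e v by rewrite inE.
have bN : b \in nbhd e v by rewrite inE.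
have := hyp aN bN ab.
have d2 : 2 <= deg e v.
  have <- : #|[set a; b]| = 2 by rewrite cards2 ab.
  rewrite /deg; apply: subset_leq_card; apply/subsetP => z.
  by rewrite !inE => /orP [] /eqP ->.
move=> h.
have : (0 < deg_in e (nbhd e v) a) || (0 < deg_in e (nbhd e v) b).
  rewrite !lt0n -negb_and; apply/negP => /andP [/eqP h1 /eqP h2].
  by move: h d2; rewrite h1 h2; lia.
have mk : forall a, e v a -> 0 < deg_in e (nbhd e v) a -> exists c, is_cycle e c.
  move=> a' eva' /card_gt0P [y]; rewrite !inE => /andP [evy eay].
  exists [:: v; a'; y]; split => //=.
  - rewrite !inE !negb_or.
    have va : v != a' by apply: contraTneq eva' => ->; rewrite eirr.
    have vy : v != y by apply: contraTneq evy => ->; rewrite eirr.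
    have ay : a' != y by apply: contraTneq eay => ->; rewrite eirr.
    by rewrite va vy ay.
  - by rewrite eva' eay esym evy.
by case/orP; [apply: mk eva | apply: mk evb].
Qed.

Lemma ham : 2 < #|T| -> hamiltonian e.
Proof.
move=> n3; have [c0 Hc0] := triangle n3.
suff : forall k c, is_cycle e c -> #|T| - size c <= k -> hamiltonian e.
  by move=> /(_ _ c0 Hc0 (leqnn _)).
elim=> [|k IH] c Hc Hk.
  exists c; split => //; apply/eqP; rewrite eqn_leq.
  have [_ U _] := Hc; rewrite -(card_uniqP U) max_card /=.
  by rewrite (card_uniqP U) -subn_eq0 -leqn0.
have [_ U _] := Hc.
have szc : size c <= #|T| by rewrite -(card_uniqP U) max_card.
case: (ltnP (size c) #|T|) => [lt|ge]; last first.
  by exists c; split => //; apply/eqP; rewrite eqn_leq szc ge.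
have [c2 [H2 S2 _]] := extend Hc lt.
apply: (IH c2 H2).
by case/orP: S2 => /eqP ->; lia.
Qed.
End Main.

Theorem mainTheorem1 (T : finType) (e : rel T) :
  simple_graph e -> connected_graph e -> 3 <= #|T| ->
  (forall v u w : T, u \in nbhd e v -> w \in nbhd e v -> u != w ->
     deg e v <= deg_in e (nbhd e v) u + deg_in e (nbhd e v) w) ->
  hamiltonian e /\ extendable12 e.
Proof.
move=> [esym eirr] conn n3 hyp; split; first exact: ham.
by move=> c Hc Hs; apply: extend.
Qed.
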